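(* Consider the control system, with state $(J_1,J_3,K_2,Q_2,J_0,Q_1,K_1,Q_3,K_3,J_2)\in\mathbb{R}^{10}$ and scalar control $g(t)$, \[ \begin{aligned} \dot J_1&=2gJ_3,\quad \dot J_3=-2gJ_1+2gK_2,\quad \dot K_2=2gJ_3+2Q_2,\quad \dot Q_2=-2K_2,\\ \dot J_0&=-2gQ_1,\quad \dot Q_1=-2gJ_0-2K_1+2gQ_3,\quad \dot K_1=2Q_1+2gK_3,\\ \dot Q_3&=-2gQ_1-2K_3,\quad \dot K_3=-2gK_1+2Q_3-2gJ_2,\quad \dot J_2=-2gK_3, \end{aligned} \] with initial state $(J_1,J_3,K_2,Q_2)=(-1,0,0,0)$, $(J_0,Q_1,K_1,Q_3,K_3,J_2)=(1,0,0,0,0,0)$. Then for every $G_0>0$ the target state $(J_1,J_3,K_2,Q_2)=(1,0,0,0)$, $(J_0,Q_1,K_1,Q_3,K_3,J_2)=(1,0,0,0,0,0)$ belongs to the reachable set of this system with controls satisfying $-G_0\le g(t)\le G_0$; that is, there exist a control $g$ with $|g(t)|\le G_0$ and a time $T>0$ such that the solution starting from the initial state is at the target state at time $T$.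
   Context: This system describes the (time-normalized) expectation values of generators of $Sp(4)$ for a cavity optomechanical system in the red-detuned regime, where $g(t)$ is the photon–phonon coupling rate in units of the mechanical frequency; the target state corresponds to a complete swap of photon and phonon populations (cooling of the mechanical resonator). *)

(* Defs.v *)
From Stdlib Require Import Reals.
From Coquelicot Require Import Coquelicot.
Open Scope R_scope.

Record state := mkState {
  sJ1 : R; sJ3 : R; sK2 : R; sQ2 : R;
  sJ0 : R; sQ1 : R; sK1 : R; sQ3 : R; sK3 : R; sJ2 : R }.

Definition fJ1 (g : R) (x : state) : R := 2 * g * sJ3 x.
Definition fJ3 (g : R) (x : state) : R := - 2 * g * sJ1 x + 2 * g * sK2 x.
Definition fK2 (g : R) (x : state) : R := 2 * g * sJ3 x + 2 * sQ2 x.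
Definition fQ2 (g : R) (x : state) : R := - 2 * sK2 x.
Definition fJ0 (g : R) (x : state) : R := - 2 * g * sQ1 x.
Definition fQ1 (g : R) (x : state) : R :=
  - 2 * g * sJ0 x - 2 * sK1 x + 2 * g * sQ3 x.
Definition fK1 (g : R) (x : state) : R := 2 * sQ1 x + 2 * g * sK3 x.
Definition fQ3 (g : R) (x : state) : R := - 2 * g * sQ1 x - 2 * sK3 x.
Definition fK3 (g : R) (x : state) : R :=
  - 2 * g * sK1 x + 2 * sQ3 x - 2 * g * sJ2 x.
Definition fJ2 (g : R) (x : state) : R := - 2 * g * sK3 x.

Definition coord_ok (c : state -> R) (f : R -> state -> R)
  (g : R -> R) (x : R -> state) (T : R) : Prop :=
  forall t, 0 <= t <= T ->
    is_RInt (fun s => f (g s) (x s)) 0 t (c (x t) - c (x 0)).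

Definition is_solution (g : R -> R) (x : R -> state) (T : R) : Prop :=
  coord_ok sJ1 fJ1 g x T /\ coord_ok sJ3 fJ3 g x T /\
  coord_ok sK2 fK2 g x T /\ coord_ok sQ2 fQ2 g x T /\
  coord_ok sJ0 fJ0 g x T /\ coord_ok sQ1 fQ1 g x T /\
  coord_ok sK1 fK1 g x T /\ coord_ok sQ3 fQ3 g x T /\
  coord_ok sK3 fK3 g x T /\ coord_ok sJ2 fJ2 g x T.

Definition initial_state : state := mkState (-1) 0 0 0 1 0 0 0 0 0.
Definition target_state  : state := mkState 1 0 0 0 1 0 0 0 0 0.

(* Main.v *)
Require Import Defs.
From Stdlib Require Import Reals Lra Nsatz.
From Stdlib Require Import Psatz.
From Coquelicot Require Import Coquelicot.
Open Scope R_scope.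

Section S.
Variables m w q r1 r2 i2 : R.
Hypothesis hi2 : 2*i2 = 1.
Hypothesis hq : q*(1+m*m) = 1.
Hypothesis hw : w*w = 4*q.
Hypothesis hr1 : r1*(m+1) = 1.
Hypothesis hr2 : r2*(m-1) = 1.
Let g := m*q.
Let p := r1*r2*q.
Definition XX (t:R) : state :=
 let A1 := -(m*m*m*m)*p in let A2 := p in let C1 := m*m*p in let C2 := -m*m*p in
 let B1 := w*(m*m*m)*p*(1+m*m)*i2 in let B2 := -p*w*(1+m*m)*i2 in
 let D1 := -m*m*p*w*(1+m*m)*i2 in let D2 := m*p*w*(1+m*m)*i2 in
 let cW := -m*m*q*r1*r1*i2 in let cV := -m*m*q*r2*r2*i2 in
 let aW := -m*r1*r1*(i2*i2) in let aV := -m*r2*r2*(i2*i2) in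
 let W := (m+1)*w in let V := (m-1)*w in
 mkState (A1*cos(w*t)+A2*cos(m*w*t)) (B1*sin(w*t)+B2*sin(m*w*t))
   (C1*cos(w*t)+C2*cos(m*w*t)) (D1*sin(w*t)+D2*sin(m*w*t))
   (1+cW*(cos(W*t)-1)+cV*(cos(V*t)-1)) (aW*W*sin(W*t)+aV*V*sin(V*t))
   (aW*(2+2*g)*(1-cos(W*t))+aV*(2-2*g)*(1-cos(V*t)))
   (aW*(2*g+2)*(cos(W*t)-1)+aV*(2*g-2)*(cos(V*t)-1))
   (aW*W*sin(W*t)-aV*V*sin(V*t)) (cW*(cos(W*t)-1)-cV*(cos(V*t)-1)).


Lemma dJ1 t : is_derive (fun t => sJ1 (XX t)) t (fJ1 g (XX t)).
Proof. unfold XX, fJ1, g, p; simpl. auto_derive; [easy|]. nsatz. Qed.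
Lemma dJ3 t : is_derive (fun t => sJ3 (XX t)) t (fJ3 g (XX t)).
Proof. unfold XX, fJ3, g, p; simpl. auto_derive; [easy|]. nsatz. Qed.
Lemma dK2 t : is_derive (fun t => sK2 (XX t)) t (fK2 g (XX t)).
Proof. unfold XX, fK2, g, p; simpl. auto_derive; [easy|]. nsatz. Qed.
Lemma dQ2 t : is_derive (fun t => sQ2 (XX t)) t (fQ2 g (XX t)).
Proof. unfold XX, fQ2, g, p; simpl. auto_derive; [easy|]. nsatz. Qed.
Lemma dJ0 t : is_derive (fun t => sJ0 (XX t)) t (fJ0 g (XX t)).
Proof. unfold XX, fJ0, g, p; simpl. auto_derive; [easy|]. nsatz. Qed.
Lemma dQ1 t : is_derive (fun t => sQ1 (XX t)) t (fQ1 g (XX t)).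
Proof. unfold XX, fQ1, g, p; simpl. auto_derive; [easy|]. nsatz. Qed.
Lemma dK1 t : is_derive (fun t => sK1 (XX t)) t (fK1 g (XX t)).
Proof. unfold XX, fK1, g, p; simpl. auto_derive; [easy|]. nsatz. Qed.
Lemma dQ3 t : is_derive (fun t => sQ3 (XX t)) t (fQ3 g (XX t)).
Proof. unfold XX, fQ3, g, p; simpl. auto_derive; [easy|]. nsatz. Qed.
Lemma dK3 t : is_derive (fun t => sK3 (XX t)) t (fK3 g (XX t)).
Proof. unfold XX, fK3, g, p; simpl. auto_derive; [easy|]. nsatz. Qed.
Lemma dJ2 t : is_derive (fun t => sJ2 (XX t)) t (fJ2 g (XX t)).
Proof. unfold XX, fJ2, g, p; simpl. auto_derive; [easy|]. nsatz. Qed.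
Lemma coord_gen (c : state -> R) (f : R -> state -> R) T :
  (forall t, is_derive (fun t => c (XX t)) t (f g (XX t))) ->
  (forall t, ex_derive (fun t => f g (XX t)) t) ->
  coord_ok c f (fun _ => g) XX T.
Proof.
intros hd hc t _.
apply (is_RInt_derive (fun t => c (XX t)) (fun s => f g (XX s)) 0 t).
- intros x0 _; apply hd.
- intros x0 _; exact (ex_derive_continuous (fun s => f g (XX s)) x0 (hc x0)).
Qed.
Lemma cJ1 t : ex_derive (fun t => fJ1 g (XX t)) t.
Proof. unfold XX, fJ1, g, p; simpl. auto_derive; easy. Qed.
Lemma cJ3 t : ex_derive (fun t => fJ3 g (XX t)) t.
Proof. unfold XX, fJ3, g, p; simpl. auto_derive; easy. Qed.
Lemma cK2 t : ex_derive (fun t => fK2 g (XX t)) t.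
Proof. unfold XX, fK2, g, p; simpl. auto_derive; easy. Qed.
Lemma cQ2 t : ex_derive (fun t => fQ2 g (XX t)) t.
Proof. unfold XX, fQ2, g, p; simpl. auto_derive; easy. Qed.
Lemma cJ0 t : ex_derive (fun t => fJ0 g (XX t)) t.
Proof. unfold XX, fJ0, g, p; simpl. auto_derive; easy. Qed.
Lemma cQ1 t : ex_derive (fun t => fQ1 g (XX t)) t.
Proof. unfold XX, fQ1, g, p; simpl. auto_derive; easy. Qed.
Lemma cK1 t : ex_derive (fun t => fK1 g (XX t)) t.
Proof. unfold XX, fK1, g, p; simpl. auto_derive; easy. Qed.
Lemma cQ3 t : ex_derive (fun t => fQ3 g (XX t)) t.
Proof. unfold XX, fQ3, g, p; simpl. auto_derive; easy. Qed.
Lemma cK3 t : ex_derive (fun t => fK3 g (XX t)) t.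
Proof. unfold XX, fK3, g, p; simpl. auto_derive; easy. Qed.
Lemma cJ2 t : ex_derive (fun t => fJ2 g (XX t)) t.
Proof. unfold XX, fJ2, g, p; simpl. auto_derive; easy. Qed.
Lemma sol_ok T : is_solution (fun _ => g) XX T.
Proof.
unfold is_solution.
split; [apply coord_gen; [exact dJ1|exact cJ1]|].
split; [apply coord_gen; [exact dJ3|exact cJ3]|].
split; [apply coord_gen; [exact dK2|exact cK2]|].
split; [apply coord_gen; [exact dQ2|exact cQ2]|].
split; [apply coord_gen; [exact dJ0|exact cJ0]|].
split; [apply coord_gen; [exact dQ1|exact cQ1]|].
split; [apply coord_gen; [exact dK1|exact cK1]|].
split; [apply coord_gen; [exact dQ3|exact cQ3]|].
split; [apply coord_gen; [exact dK3|exact cK3]|].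
apply coord_gen; [exact dJ2|exact cJ2].
Qed.
End S.

Theorem theorem1 (G0 : R) (hG0 : 0 < G0) :
  exists (g : R -> R) (T : R) (x : R -> state),
    0 < T /\
    (forall t, 0 <= t <= T -> - G0 <= g t <= G0) /\
    is_solution g x T /\
    x 0 = initial_state /\
    x T = target_state.
Proof.
destruct (INR_unbounded (/ G0)) as [n hn].
set (k := S n).
set (m := 2 * INR k + 1).
assert (hk : INR k = INR n + 1) by (unfold k; rewrite S_INR; lra).
assert (hn0 : 0 <= INR n) by apply pos_INR.
assert (hm3 : 3 <= m) by (unfold m; lra).
assert (hmG : 1 < m * G0).
{ assert (h1 : / G0 < m) by (unfold m; lra).
  apply (Rmult_lt_compat_r G0) in h1; [|lra].
  rewrite Rinv_l in h1; lra. }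
set (q := / (1 + m*m)).
assert (hpos : 0 < 1 + m*m) by nra.
assert (hq : q * (1 + m*m) = 1) by (unfold q; field; lra).
assert (hq0 : 0 < q) by (unfold q; apply Rinv_0_lt_compat; lra).
set (w := 2 * sqrt q).
assert (hsq : 0 < sqrt q) by (apply sqrt_lt_R0; lra).
assert (hw : w * w = 4 * q).
{ unfold w. replace (2 * sqrt q * (2 * sqrt q)) with (4 * (sqrt q * sqrt q)) by ring.
  rewrite sqrt_sqrt; lra. }
assert (hw0 : 0 < w) by (unfold w; lra).
set (r1 := / (m + 1)). set (r2 := / (m - 1)). set (i2 := / 2).
assert (hr1 : r1 * (m+1) = 1) by (unfold r1; field; lra).
assert (hr2 : r2 * (m-1) = 1) by (unfold r2; field; lra).
assert (hi2 : 2 * i2 = 1) by (unfold i2; field).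
clearbody q w r1 r2 i2.
exists (fun _ => m * q), (PI / w), (XX m w q r1 r2 i2).
split; [apply Rdiv_lt_0_compat; [apply PI_RGT_0|lra]|].
split.
{ intros t _. split.
  - assert (0 < m * q) by (apply Rmult_lt_0_compat; lra). lra.
  - assert (h : m * q * (1 + m*m) <= G0 * (1 + m*m)) by (rewrite Rmult_assoc, hq; nra).
    apply Rmult_le_reg_r in h; lra. }
split; [apply sol_ok; assumption|].
split.
- unfold XX, initial_state.
  repeat rewrite Rmult_0_r. rewrite cos_0, sin_0.
  f_equal; [|nsatz..].
  replace (- (m * m * m * m) * (r1 * r2 * q) * 1 + r1 * r2 * q * 1) with
    (- ((r1*(m+1))*(r2*(m-1))*(q*(1+m*m)))) by ring.
  rewrite hr1, hr2, hq; ring.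
- assert (e1 : w * (PI / w) = PI) by (field; lra).
  assert (e0 : forall a, a * w * (PI / w) = a * PI) by (intro; field; lra).
  assert (e2 : m * PI = PI + 2 * INR k * PI) by (unfold m; ring).
  assert (e3 : (m + 1) * PI = 0 + 2 * INR (S k) * PI) by (unfold m; rewrite S_INR; ring).
  assert (e4 : (m - 1) * PI = 0 + 2 * INR k * PI) by (unfold m; ring).
  unfold XX, target_state.
  rewrite e1, !e0, e2, e3, e4, !cos_period, !sin_period, cos_PI, sin_PI, cos_0, sin_0.
  f_equal; [|nsatz..].
  replace (- (m * m * m * m) * (r1 * r2 * q) * -1 + r1 * r2 * q * -1) with
    (((r1*(m+1))*(r2*(m-1))*(q*(1+m*m)))) by ring.
  rewrite hr1, hr2, hq; ring.
Qed.
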